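(* For $x$ sufficiently large, let $r=\pi\!\left(2\frac{\log x}{\log\log x}\right)$ and let $$\mathcal{A}(x)=\left\{(a_1,\dots,a_r)\in\mathbb{Z}_{\ge 0}^r:\ \sum_{j=1}^r a_j\log p_j\le\log x,\ \ a_i\ge \left\lfloor \frac{p_j}{p_i}\right\rfloor a_j \text{ for all } 1\le i<j\le r\right\}.$$ Then $\mathcal{J}(x)\le \#\mathcal{A}(x)$.
   Context: $p_1=2<p_2=3<\cdots$ is the sequence of primes and $\pi(y)$ the number of primes $\le y$. A positive integer $n$ is a Jordan-Pólya number if it can be written as a product of factorials, i.e. $n=a_1!\cdots a_s!$ for some $s\ge1$ and positive integers $a_i$; $\mathcal{J}(x)$ is the number of Jordan-Pólya numbers $\le x$. $\log$ is the natural logarithm. *)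

(* Defs.v *)
From HB Require Import structures.
From mathcomp Require Import all_boot all_order all_algebra.
From mathcomp Require Import boolp Rstruct.
From Stdlib Require Import Reals.

Set Implicit Arguments.
Unset Strict Implicit.
Unset Printing Implicit Defensive.

Import Order.TTheory GRing.Theory Num.Theory.

(* floor of a real, truncated at 0 (only used for counting naturals <= y) *)
Definition floorR (y : R) : nat := Z.to_nat (Int_part y).

Definition primes_upto (N : nat) : seq nat := [seq p <- iota 0 N.+1 | prime p].

Definition prime_pi (y : R) : nat := size (primes_upto (floorR y)).

(* nth_prime j = p_{j+1}  (0-indexed: nth_prime 0 = 2).  Correct because
   p_{j+1} <= 2^(2^j) (Euclid's bound). *)
Definition nth_prime (j : nat) : nat := nth 0 (primes_upto (expn 2 (expn 2 j))) j.

Definition is_JP (n : nat) : Prop :=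
  exists s : seq nat, [/\ 0 < size s, all (fun a => 0 < a) s & n = \prod_(a <- s) a`!].

Definition JP_count (x : R) : nat :=
  #|[set n : 'I_(floorR x).+1 | (0 < val n) && `[< is_JP (val n) >] ]|.

Definition rJ (x : R) : nat := prime_pi (Rdiv (Rmult 2 (ln x)) (ln (ln x))).

(* Tuples are indexed by 'I_r (index j <-> p_{j+1}).  Entries are
   taken in 'I_(floor x + 1); this bound is implied by the log constraint
   (a_j log 2 <= log x) for x >= 1, so it does not change the set. *)
Definition A_count (x : R) : nat :=
  #|[set a : {ffun 'I_(rJ x) -> 'I_(floorR x).+1} |
      `[< Rle (\big[Rplus/R0]_(j < rJ x) Rmult (INR (val (a j))) (ln (INR (nth_prime j))))
              (ln x)
           /\ forall i j : 'I_(rJ x), (i < j)%N ->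
                (nth_prime j %/ nth_prime i * val (a j) <= val (a i))%N >] ]|.

(* Main.v *)
Require Import Defs.
From HB Require Import structures.
From mathcomp Require Import all_boot all_order all_algebra.
From mathcomp Require Import boolp Rstruct.
From Stdlib Require Import Reals.
From Stdlib Require Import Lra Lia.
Section RealPart.
Local Open Scope R_scope.

Lemma ln_le' x y : 0 < x -> x <= y -> ln x <= ln y.
Proof.
move=> hx hxy; case: (Rle_lt_or_eq_dec _ _ hxy) => h.
  by apply: Rlt_le; apply: ln_increasing.
by rewrite h; apply: Rle_refl.
Qed.

Lemma exp_pow_n t n : exp t ^ n = exp (INR n * t).
Proof.
elim: n => [|n IH]; first by rewrite /= Rmult_0_l exp_0.
rewrite [LHS]/= IH -exp_plus; f_equal; rewrite S_INR; ring.
Qed.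

Lemma INR_fact_pos a : 0 < INR (a`!).
Proof. apply: lt_0_INR; apply/ltP; exact: fact_gt0. Qed.

Lemma pow_fact_le (a : nat) : INR a ^ a <= exp (INR a) * INR (a`!).
Proof.
elim: a => [|a IH].
  by rewrite /= exp_0; lra.
have key : (INR a + 1) ^ a <= exp 1 * INR a ^ a.
  case: a IH => [|a] IH.
    rewrite /= ; have := exp_ineq1_le 1; lra.
  set A := INR a.+1.
  have hA : 0 < A by apply: lt_0_INR; lia.
  have -> : A + 1 = A * (1 + / A) by field; lra.
  rewrite Rpow_mult_distr Rmult_comm.
  apply: Rmult_le_compat_r; first by apply: pow_le; lra.
  apply: Rle_trans (_ : exp (/ A) ^ a.+1 <= _).
    apply: pow_incr; split; first by have := Rinv_0_lt_compat _ hA; lra.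
    exact: exp_ineq1_le.
  rewrite exp_pow_n -/A; right; f_equal; field; lra.
rewrite factS S_INR mult_INR S_INR /= exp_plus.
have h0 : 0 <= INR a by apply: pos_INR.
have h1 : 0 < exp 1 by apply: exp_pos.
have h2 : 0 <= INR a ^ a by apply: pow_le.
apply: Rle_trans (_ : (INR a + 1) * (exp 1 * INR a ^ a) <= _).
  apply: Rmult_le_compat_l; lra.
have := INR_fact_pos a; have := exp_pos (INR a).
move=> h3 h4.
have : exp 1 * INR a ^ a <= exp 1 * (exp (INR a) * INR a`!) by apply: Rmult_le_compat_l; lra.
nra.
Qed.

Lemma ln_fact_ge (a : nat) : leq 1 a -> INR a * ln (INR a) - INR a <= ln (INR (a`!)).
Proof.
move=> ha.
have hA : 0 < INR a by apply: lt_0_INR; apply/ltP.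
rewrite -ln_pow //.
have := ln_le' (INR a ^ a) _ (pow_lt _ _ hA) (pow_fact_le a).
rewrite ln_mult ?ln_exp; [lra| apply: exp_pos | apply: INR_fact_pos].
Qed.

Lemma fact_bound (x : R) (a : nat) : exp (exp 16) <= x -> INR (a`!) <= x ->
  INR a <= 2 * ln x / ln (ln x).
Proof.
move=> hx hf.
have hx0 : 0 < x by have := exp_pos (exp 16); lra.
set L := ln x.
have hL : exp 16 <= L by rewrite /L -[exp 16]ln_exp; apply: ln_le' => //; apply: exp_pos.
have hL0 : 0 < L by have := exp_pos 16; lra.
set u := ln L.
have hu : 16 <= u by rewrite /u -[16]ln_exp; apply: ln_le' => //; apply: exp_pos.
set y := 2 * L / u.
have hy : 0 < y by rewrite /y; apply: Rdiv_lt_0_compat; lra.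
case: (Rle_or_lt (INR a) y) => // hay; exfalso.
set A := INR a in hay *.
have hA : 0 < A by lra.
have ha1 : leq 1 a by move: hA; rewrite /A; case: (a) => [|a'] //=; lra.
have lny : ln y = ln 2 + u - ln u.
  rewrite /y /Rdiv ln_mult; [|lra|by apply: Rinv_0_lt_compat; lra].
  rewrite ln_mult; [|lra|lra].
  rewrite ln_Rinv; [|lra]. rewrite /u; ring.
have hln2 := ln_lt_2.
set s := sqrt u.
have hs0 : 0 <= s by apply: sqrt_pos.
have hss : s * s = u by apply: sqrt_sqrt; lra.
have hs4 : 4 <= s by nra.
have hs : 0 < s by lra.
have hlns : ln s <= s - 1.
  have h := exp_ineq1_le (s - 1).
  have h' : s <= exp (s - 1) by lra.
  have := ln_le' s _ hs h'.
  by rewrite ln_exp.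
have hlnu : ln u = 2 * ln s by rewrite -hss ln_mult //; ring.
have hu0 : 0 < u by lra.
set K := ln 2 + u - ln u - 1.
have hK : u <= 2 * K by rewrite /K; nra.
have hyc : L <= y * (ln y - 1).
  have -> : y * (ln y - 1) = L * (2 * K) / u by rewrite lny /y /K; field; lra.
  apply: (Rmult_le_reg_r u) => //.
  have -> : L * (2 * K) / u * u = L * (2 * K) by field; lra.
  nra.
set c := ln y - 1 in hyc.
have hc : 0 < c by nra.
have hlnA : ln y < ln A by apply: ln_increasing.
have h1 := ln_fact_ge a ha1.
rewrite -/A in h1.
have h2 : ln (INR a`!) <= L by apply: ln_le' => //; apply: INR_fact_pos.
have h3 : y * c < A * (ln A - 1) by rewrite /c in hc *; nra.
lra.
Qed.

End RealPart.

From mathcomp Require Import zify.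
Import ssrnat.

Lemma mem_pu N p : (p \in primes_upto N) = prime p && (p <= N)%N.
Proof. by rewrite /primes_upto mem_filter mem_iota add0n ltnS. Qed.

Lemma uniq_pu N : uniq (primes_upto N).
Proof. by rewrite /primes_upto filter_uniq // iota_uniq. Qed.

Lemma pu_cat N M : (N <= M)%N ->
  primes_upto M = primes_upto N ++ [seq p <- iota N.+1 (M - N) | prime p].
Proof.
move=> h; have e : M.+1 = (N.+1 + (M - N))%N by rewrite addSn subnKC.
by rewrite /primes_upto {1}e iotaD filter_cat.
Qed.

Lemma euclid_aux j : exists s : seq nat,
  [/\ size s = j.+1, uniq s, all prime s, all (fun p => p <= 2 ^ (2 ^ j))%N s
    & (\prod_(p <- s) p <= 2 ^ (2 ^ j.+1).-1)%N].
Proof.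
elim: j => [|j [s [hs hu hp hb hQ]]].
  by exists [:: 2%N]; rewrite big_seq1.
set Q := (\prod_(p <- s) p)%N.
have hQ0 : (0 < Q)%N.
  rewrite /Q; elim: (s) hp => [|a s' IH]; rewrite ?big_nil ?big_cons //=.
  by move=> /andP [pa /IH h]; rewrite muln_gt0 (prime_gt0 pa) h.
set p := pdiv Q.+1.
have pp : prime p by apply: pdiv_prime; rewrite ltnS.
have pns : p \notin s.
  apply/negP => ps.
  have d1 : (p %| Q)%N by rewrite /Q (big_rem _ ps) /= dvdn_mulr.
  have d2 : (p %| Q.+1)%N by apply: pdiv_dvd.
  by move: d2; rewrite -addn1 dvdn_addr // Euclid_dvd1.
have e1 : (0 < 2 ^ j.+1)%N.
by rewrite expn_gt0.
have hpl : (p <= 2 ^ (2 ^ j.+1))%N.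
  apply: leq_trans (pdiv_leq (ltn0Sn Q)) _.
  apply: leq_trans (_ : (2 ^ (2 ^ j.+1).-1).+1 <= _)%N; first by rewrite ltnS.
  have key : forall e, (0 < e)%N -> (2 ^ e.-1 + 1 <= 2 ^ e)%N.
    by case=> // e' _; rewrite /= expnS mul2n -addnn leq_add2l expn_gt0.
  by rewrite -addn1; apply: key.
exists (p :: s); split => //=.
- by rewrite hs.
- by rewrite pns.
- by rewrite pp.
- rewrite hpl /=; apply/allP => q /(allP hb) hq; apply: leq_trans hq _.
  by apply: leq_pexp2l => //; rewrite leq_exp2l.
- rewrite big_cons.
  apply: leq_trans (leq_mul hpl hQ) _.
  rewrite -expnD; apply: leq_pexp2l => //.
  rewrite [(2 ^ j.+2)%N]expnS; move: e1; set e := (2 ^ j.+1)%N => e1; lia.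
Qed.

Lemma euclid j : (j < size (primes_upto (2 ^ (2 ^ j))))%N.
Proof.
have [s [hs hu hp hb _]] := euclid_aux j.
rewrite -hs; apply: uniq_leq_size => // q qs.
by rewrite mem_pu (allP hp _ qs) (allP hb _ qs).
Qed.

Lemma nthP B j : (j < size (primes_upto B))%N -> nth_prime j = nth 0%N (primes_upto B) j.
Proof.
move=> hj; rewrite /nth_prime.
case: (leqP B (2 ^ (2 ^ j))) => h.
  by rewrite (@pu_cat _ _ h) nth_cat hj.
rewrite (@pu_cat _ _ (ltnW h)) nth_cat euclid; done.
Qed.

Lemma fact_dvd p a : prime p -> (p %| a`!)%N -> (p <= a)%N.
Proof.
move=> pp; elim: a => [|a IH]; first by rewrite fact0 Euclid_dvd1.
rewrite factS Euclid_dvdM // => /orP [h|h].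
  by apply: dvdn_leq.
by apply: leq_trans (IH h) _.
Qed.

Lemma legendre_fact p q a : prime p -> prime q ->
  (q %/ p * logn q a`! <= logn p a`!)%N.
Proof.
move=> pp pq; rewrite !logn_fact // big_distrr /=.
rewrite big_nat_cond [X in (_ <= X)%N]big_nat_cond.
apply: leq_sum => k /andP [/andP [hk _] _].
set t := (q %/ p)%N.
have hp0 := prime_gt0 pp.
rewrite leq_divRL ?expn_gt0 ?hp0 //.
have htp : (t * p ^ k <= q ^ k)%N.
  case: (posnP t) => [->|t0]; first by rewrite mul0n.
  apply: leq_trans (_ : t ^ k * p ^ k <= _)%N.
    by rewrite leq_mul2r; apply/orP; right; rewrite -{1}(expn1 t) leq_pexp2l.
  by rewrite -expnMn leq_exp2r // leq_trunc_div.
rewrite mulnAC -mulnA.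
apply: leq_trans (_ : a %/ q ^ k * q ^ k <= _)%N; last exact: leq_trunc_div.
by rewrite mulnA [X in (_ <= X)%N]mulnC leq_mul2r htp orbT.
Qed.

Lemma logn_prod_fact p s : logn p (\prod_(a <- s) a`!) = (\sum_(a <- s) logn p a`!)%N.
Proof.
elim: s => [|a s IH]; first by rewrite !big_nil logn1.
rewrite !big_cons lognM ?fact_gt0 ?IH //.
by apply: prodn_gt0 => i; apply: fact_gt0.
Qed.

Lemma legendre_jp p q n : prime p -> prime q -> is_JP n ->
  (q %/ p * logn q n <= logn p n)%N.
Proof.
move=> pp pq [s [_ _ ->]].
rewrite !logn_prod_fact big_distrr /=; apply: leq_sum => a _.
exact: legendre_fact.
Qed.

Lemma logn_le p n : (logn p n <= n)%N.
Proof.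
case: (posnP n) => [->|n0]; first by rewrite logn0.
case: (boolP (prime p)) => pp; last by rewrite lognE (negbTE pp).
apply: leq_trans (ltnW (ltn_expl _ (prime_gt1 pp))) _.
exact: dvdn_leq n0 (pfactor_dvdnn p n).
Qed.

Lemma logn_out n (ps : seq nat) q : (forall p, p \in primes n -> p \in ps) -> q \notin ps -> logn q n = 0%N.
Proof.
move=> h hq; apply/eqP; rewrite -leqn0 leqNgt logn_gt0.
by apply/negP => /h; apply/negP.
Qed.

Lemma prod_ps n (ps : seq nat) : (0 < n)%N -> (forall p, p \in primes n -> p \in ps) -> uniq ps ->
  n = (\prod_(p <- ps) p ^ logn p n)%N.
Proof.
move=> n0 h hu.
rewrite (bigID (mem (primes n))) /= [X in (_ * X)%N]big1 ?muln1; last first.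
  by move=> p hp; rewrite (@logn_out n (primes n) p) ?expn0.
rewrite -big_filter.
rewrite -(perm_big _ (uniq_perm (primes_uniq n) (filter_uniq _ hu) _)); last first.
  by move=> p; rewrite mem_filter; case: (boolP (p \in primes n)) => //= /h ->.
by rewrite {1}(prod_prime_decomp n0) prime_decompE big_map.
Qed.

Section Floors.
Local Open Scope R_scope.
Lemma floor_ge (p : nat) y : INR p <= y -> leq p (floorR y).
Proof.
move=> h; have [h1 h2] := base_Int_part y.
rewrite /floorR; set z := Int_part y in h1 h2 *.
have : IZR (Z.of_nat p) < IZR (z + 1) by rewrite plus_IZR -INR_IZR_INZ; lra.
move/lt_IZR => hz; apply/leP; lia.
Qed.

Lemma floor_le (p : nat) y : 0 <= y -> leq p (floorR y) -> INR p <= y.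
Proof.
move=> hy /leP h; have [h1 h2] := base_Int_part y.
move: h; rewrite /floorR; set z := Int_part y in h1 h2 * => h.
have hz : (Z.of_nat p <= Z.max 0 z)%Z by lia.
rewrite INR_IZR_INZ; apply: Rle_trans (IZR_le _ _ hz) _.
case: (Z.max_spec 0 z) => [[_ ->]|[_ ->]] //.
Qed.

Lemma ln_prod (r : nat) (F : 'I_r -> nat) : (forall j, 0 < F j)%N ->
  ln (INR (\prod_(j < r) F j)%N) = \big[Rplus/R0]_(j < r) ln (INR (F j)).
Proof.
move=> hF.
apply: (proj2 (big_ind2 (fun m v => (0 < m)%N /\ ln (INR m) = v) _ _ _)).
- by split => //; rewrite /= ln_1.
- move=> m1 v1 m2 v2 [p1 <-] [p2 <-]; split; first by rewrite muln_gt0 p1 p2.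
  rewrite mult_INR ln_mult //; apply: lt_0_INR; apply/ltP => //.
- by move=> j _; split.
Qed.
End Floors.

Lemma INR_expn a b : INR (expn a b) = Rpow_def.pow (INR a) b.
Proof.
elim: b => [|b IH]; first by rewrite expn0.
by rewrite expnS mult_INR IH.
Qed.

Theorem mainTheorem6 :
  exists x0 : R, forall x : R, Rle x0 x -> (JP_count x <= A_count x)%N.
Proof.
exists (exp (exp 16)) => x hx.
have hx0 : Rlt 0 x by have := exp_pos (exp 16); lra.
set y := Rdiv (Rmult 2 (ln x)) (ln (ln x)).
set B := floorR y.
set ps := primes_upto B.
have hr : rJ x = size ps by [].
have jpprimes : forall n, (0 < n)%N -> is_JP n -> Rle (INR n) x ->
    forall p, p \in primes n -> p \in ps.
  move=> n n0 [s [_ _ hns]] hnx p; rewrite mem_primes => /and3P [pp _ pn].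
  move: pn; rewrite hns Euclid_dvd_prod // big_has => /hasP [a ais pa].
  have hpa := @fact_dvd _ _ pp pa.
  have hadvd : (a`! %| n)%N by rewrite hns (big_rem _ ais) /= dvdn_mulr.
  have hale : (a`! <= n)%N := dvdn_leq n0 hadvd.
  have hax : Rle (INR (a`!)) x by apply: Rle_trans hnx; apply: le_INR; apply/leP.
  have hay := fact_bound x a hx hax.
  rewrite /ps mem_pu pp /=; apply: floor_ge.
  apply: Rle_trans hay; apply: le_INR; apply/leP; exact: hpa.
rewrite /JP_count /A_count.
set S := [set n : 'I_(floorR x).+1 | _].
set T := [set a : {ffun _} | _].
pose F := fun n : 'I_(floorR x).+1 =>
  [ffun j : 'I_(rJ x) => (inord (logn (nth_prime j) n) : 'I_(floorR x).+1)].
have Sprop : forall n, n \in S -> [/\ (0 < val n)%N, is_JP (val n) & Rle (INR (val n)) x].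
  move=> n; rewrite inE => /andP [n0 /asboolP hj]; split => //.
  apply: floor_le; first lra.
  by rewrite -ltnS ltn_ord.
have Fval : forall n j, val (F n j) = logn (nth_prime j) n.
  move=> n j; rewrite /F ffunE /=; apply: inordK; rewrite ltnS.
  apply: leq_trans (logn_le _ _) _; rewrite -ltnS; exact: ltn_ord.
have pj : forall j : 'I_(rJ x), nth_prime j = nth 0%N ps j.
  by move=> j; apply: nthP; exact: ltn_ord.
have primej : forall j : 'I_(rJ x), prime (nth_prime j).
  move=> j; have := mem_nth 0%N (ltn_ord j : (j < size ps)%N).
  by rewrite -pj mem_pu => /andP [].
have inj : {in S &, injective F}.
  move=> n m nS mS eFnm.
  have [n0 hjn hnx] := Sprop n nS; have hpn := jpprimes _ n0 hjn hnx.
  have [m0 hjm hmx] := Sprop m mS; have hpm := jpprimes _ m0 hjm hmx.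
  apply: val_inj; apply: eqn_from_log => // q.
  case: (boolP (q \in ps)) => hq.
    have hi : (index q ps < rJ x)%N by rewrite hr index_mem.
    have := congr1 (fun f : {ffun 'I_(rJ x) -> 'I_(floorR x).+1} => val (f (Ordinal hi))) eFnm.
    by rewrite /= !Fval (pj (Ordinal hi)) /= nth_index.
  by rewrite (@logn_out _ ps q hpn hq) (@logn_out _ ps q hpm hq).
rewrite -(card_in_imset inj); apply: subset_leq_card; apply/subsetP => a /imsetP [n nS ->].
have [n0 hjp hnx] := Sprop n nS; have hpn := jpprimes _ n0 hjp hnx.
rewrite inE; apply/asboolP; split.
  rewrite (eq_bigr (fun j : 'I_(rJ x) => ln (INR (nth_prime j ^ logn (nth_prime j) n)%N))); last first.
    move=> j _; rewrite Fval INR_expn ln_pow //; apply: lt_0_INR; apply/ltP.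
    exact: prime_gt0.
  rewrite -ln_prod; last by move=> j; rewrite expn_gt0 prime_gt0.
  have -> : (\prod_(j < rJ x) nth_prime j ^ logn (nth_prime j) n)%N = val n.
    apply/esym; rewrite {1}(@prod_ps _ ps n0 hpn (uniq_pu B)) (big_nth 0%N) big_mkord.
    by apply: eq_bigr => j _; rewrite pj.
  apply: ln_le' => //; apply: lt_0_INR; apply/ltP; exact: n0.
move=> i j _; rewrite !Fval; exact: (@legendre_jp _ _ _ (primej i) (primej j) hjp).
Qed.
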